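(* Let $X$ be a rearrangement invariant sequence space such that the discrete Cesàro operator $C$ is bounded on $X$. Then $(CX)_a=C(X_a)$.
   Context: A rearrangement invariant sequence space is a Banach space $X$ of real sequences with the ideal property ($|x|\le|y|$ coordinatewise, $y\in X$ imply $x\in X$, $\|x\|_X\le\|y\|_X$), containing a sequence with all coordinates nonzero, with equal norms for equimeasurable sequences. $C(x)_n=\frac1n\sum_{k=1}^nx_k$. $CX=\{x:C(|x|)\in X\}$ with $\|x\|_{CX}=\|C(|x|)\|_X$, and $C(X_a)=\{x: C(|x|)\in X_a\}$. For a Banach ideal space $Y$, $Y_a$ denotes the ideal of order continuous elements: $y\in Y_a$ iff $0\le y^{(n)}\le|y|$, $y^{(n)}\downarrow0$ coordinatewise imply $\|y^{(n)}\|_Y\to0$. *)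

(* Defs.v *)
(* sequences are  nat -> R  with R : realType,
   indices shifted to start at 0 (paper's x_1 is our x 0). *)
From HB Require Import structures.
From mathcomp Require Import all_boot all_order all_algebra.
From mathcomp Require Import all_classical all_reals all_analysis.
Set Implicit Arguments. Unset Strict Implicit. Unset Printing Implicit Defensive.
Import Order.TTheory GRing.Theory Num.Theory.
Import numFieldNormedType.Exports.
Local Open Scope classical_set_scope.
Local Open Scope ring_scope.

Section Defs.
Variable R : realType.
Notation seqR := (nat -> R).

Definition absq (x : seqR) : seqR := fun n => `|x n|.

Definition cesaro (x : seqR) : seqR :=
  fun n => (n.+1%:R)^-1 * \sum_(k < n.+1) x k.

(* equimeasurable: equal distribution functions t |-> #{n : |x n| > t},
   values being cardinals (possibly infinite) *)
Definition equimeasurable (x y : seqR) : Prop :=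
  forall t : R, 0 < t -> card_eq [set n | t < `|x n|] [set n | t < `|y n|].

Definition banach_seq_space (X : set seqR) (nrm : seqR -> R) : Prop :=
  X (fun _ => 0) /\
      (forall x y, X x -> X y -> X (fun n => x n + y n)) /\
      (forall (a : R) x, X x -> X (fun n => a * x n)) /\
      (forall x, X x -> 0 <= nrm x /\ (nrm x = 0 <-> x = (fun _ => 0))) /\
      (forall (a : R) x, X x -> nrm (fun n => a * x n) = `|a| * nrm x) /\
      (forall x y, X x -> X y -> nrm (fun n => x n + y n) <= nrm x + nrm y) /\
      (forall u : nat -> seqR, (forall m, X (u m)) ->
         (forall e : R, 0 < e -> exists N, forall m k, (N <= m)%N -> (N <= k)%N ->
              nrm (fun n => u m n - u k n) < e) ->
         exists2 v, X v & (fun m => nrm (fun n => u m n - v n)) @ \oo --> (0 : R)).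

Definition ideal_property (X : set seqR) (nrm : seqR -> R) : Prop :=
  forall x y, (forall n, `|x n| <= `|y n|) -> X y -> X x /\ nrm x <= nrm y.

Definition banach_ideal_space (X : set seqR) (nrm : seqR -> R) : Prop :=
  banach_seq_space X nrm /\ ideal_property X nrm.

Definition ri_space (X : set seqR) (nrm : seqR -> R) : Prop :=
  [/\ banach_ideal_space X nrm,
      (exists2 x, X x & forall n, x n != 0) &
      (forall x y, X x -> equimeasurable x y -> X y /\ nrm y = nrm x)].

Definition cesaro_bounded (X : set seqR) (nrm : seqR -> R) : Prop :=
  (forall x, X x -> X (cesaro x)) /\
  exists K : R, forall x, X x -> nrm (cesaro x) <= K * nrm x.

Definition CX (X : set seqR) : set seqR := [set x | X (cesaro (absq x))].
Definition CX_norm (nrm : seqR -> R) : seqR -> R := fun x => nrm (cesaro (absq x)).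

Definition order_cont (Y : set seqR) (nrm : seqR -> R) : set seqR :=
  [set y | Y y /\
    forall yy : nat -> seqR,
      (forall m k, 0 <= yy m k /\ yy m k <= `|y k|) ->
      (forall m k, yy m.+1 k <= yy m k) ->
      (forall k, (fun m => yy m k) @ \oo --> (0 : R)) ->
      (fun m => nrm (yy m)) @ \oo --> (0 : R)].

Definition C_of (Xa : set seqR) : set seqR := [set x | Xa (cesaro (absq x))].

End Defs.

(* Main.v *)
Require Import Defs.
From HB Require Import structures.
From mathcomp Require Import all_boot all_order all_algebra.
From mathcomp Require Import all_classical all_reals all_analysis.
From mathcomp Require Import lra.
Set Implicit Arguments. Unset Strict Implicit. Unset Printing Implicit Defensive.
Import Order.TTheory GRing.Theory Num.Theory.
Import numFieldNormedType.Exports.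
Local Open Scope classical_set_scope.
Local Open Scope ring_scope.

Lemma near_ex (P : nat -> Prop) : (\forall n \near \oo, P n) -> exists N, forall n, (N <= n)%N -> P n.
Proof. by move=> [N _ HN]; exists N => n; apply: HN. Qed.

Lemma cvg0P (R : realType) (u : nat -> R) :
  u @ \oo --> 0 <-> forall e, 0 < e -> exists N, forall n, (N <= n)%N -> `|u n| < e.
Proof.
rewrite cvgr0Pnorm_lt; split=> H e e0.
  by apply: near_ex; apply: H.
by have [N HN] := H e e0; exists N => // n /= Hn; apply: HN.
Qed.

Lemma cvg_sum0 (R : realType) n (f : nat -> nat -> R) :
  (forall j, (j < n)%N -> f j @ \oo --> 0) -> (fun m => \sum_(j < n) f j m) @ \oo --> 0.
Proof.
elim: n => [|n IH] H.
  have -> : (fun m => \sum_(j < 0) f j m) = fun=> 0 by apply: funext => m; rewrite big_ord0.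
  exact: cvg_cst.
have -> : (fun m => \sum_(j < n.+1) f j m) = fun m => \sum_(j < n) f j m + f n m.
  by apply: funext => m; rewrite big_ord_recr.
have H1 : (fun m => \sum_(j < n) f j m) @ \oo --> 0.
  by apply: IH => j Hj; apply: H; apply: ltnW.
have := cvgD H1 (H n (ltnSn n)); rewrite addr0 => HH; exact: HH.
Qed.

Lemma harm_div (R : realType) (B : R) : exists M, forall M', (M <= M')%N ->
  B < \sum_(j < M') (j.+1%:R : R)^-1.
Proof.
have H : series (@harmonic R) @ \oo --> +oo.
  apply: nondecreasing_dvgn_lt; last exact: dvg_harmonic.
  apply: nondecreasing_series => n _ _; exact: harmonic_ge0.
have [M HM] := near_ex ((proj1 (cvgryPgt _)) H B).
exists M => M' HM'; have := HM M' HM'.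
by rewrite seriesEord /=.
Qed.

Theorem proposition5p1 (R : realType) (X : set (nat -> R)) (nrm : (nat -> R) -> R) :
  ri_space X nrm -> Defs.cesaro_bounded X nrm ->
  order_cont (CX X) (CX_norm nrm) = C_of (order_cont X nrm).
Proof.
move=> [[[X0 [XD [XZ [Xn [nZ [nD _]]]]]] Xid] [w Xw w0] _] [XC _].
have nge0 : forall x, X x -> 0 <= nrm x by move=> x /Xn [].
have ces_ge0 : forall (y : nat -> R) (k : nat), (forall j, 0 <= y j) -> 0 <= Defs.cesaro y k.
  move=> y k Hy; rewrite /Defs.cesaro mulr_ge0 ?invr_ge0 ?ler0n //.
  by apply: sumr_ge0 => j _.
have ces_le : forall (y z : nat -> R) (k : nat), (forall j, y j <= z j) -> Defs.cesaro y k <= Defs.cesaro z k.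
  move=> y z k Hyz; rewrite /Defs.cesaro ler_wpM2l ?invr_ge0 ?ler0n //.
  by apply: ler_sum => j _.
apply/seteqP; split => x.
- move=> [Xg Hx]; split => //.
  pose h : nat -> R := fun k => (k.+1%:R)^-1.
  have h_gt0 k : 0 < h k by rewrite /h invr_gt0 ltr0n.
  have Xh : X h.
    pose e0 : nat -> R := fun k => if k == 0%N then 1 else 0.
    have Xe0 : X e0.
      have := Xid e0 (fun n => (w 0%N)^-1 * w n) _ (XZ _ _ Xw); case => //.
      move=> n; rewrite /e0; case: eqP => [->|_]; last by rewrite normr0.
      by rewrite mulVf // normr1.
    have := Xid h (Defs.cesaro e0) _ (XC _ Xe0); case => // k.
    rewrite /Defs.cesaro /e0 big_ord_recl /= big1 ?addr0 ?mulr1 //.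
  pose Ch := Defs.cesaro h.
  have XCh : X Ch := XC _ Xh.
  pose HM M := \sum_(j < M) h j.
  pose yM M : nat -> R := fun k => if (M <= k)%N then h k else 0.
  have yM_bd M : (0 < M)%N -> X (yM M) /\ nrm (yM M) <= (HM M)^-1 * nrm Ch.
    move=> M0.
    have HMgt0 : 0 < HM M.
      rewrite /HM (bigD1 (Ordinal M0)) //=.
      apply: (lt_le_trans (h_gt0 0%N)); rewrite lerDl.
      by apply: sumr_ge0 => i _; exact: ltW (h_gt0 _).
    have := Xid (yM M) (fun n => (HM M)^-1 * Ch n) _ (XZ _ _ XCh); case.
      move=> k; rewrite /yM; case: leqP => Hk; last by rewrite normr0 normr_ge0.
      rewrite !ger0_norm; last 2 first.
      - by rewrite mulr_ge0 ?invr_ge0 ?(ltW HMgt0) //; apply: ces_ge0 => j; exact: ltW.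
      - exact: ltW.
      rewrite /Ch /Defs.cesaro mulrCA; apply: ler_peMr; first exact: ltW.
      rewrite mulrC ler_pdivlMr // mul1r /HM (big_ord_widen _ (fun j => h j) (leqW Hk)).
      rewrite big_mkcond /=; apply: ler_sum => j _; case: ifP => // _; exact: ltW.
    move=> XyM le; split => //; rewrite nZ // gtr0_norm ?invr_gt0 // in le.
  pose yy N : nat -> R := fun k => if (N <= k)%N then `|x k| else 0.
  pose T N := Defs.cesaro (absq (yy N)).
  have T0 N k : 0 <= T N k by apply: ces_ge0 => j; exact: normr_ge0.
  have XT N : X (T N).
    have := Xid (T N) _ _ Xg; case => // k.
    rewrite !ger0_norm //; last by apply: ces_ge0 => j; exact: normr_ge0.
    apply: ces_le => j; rewrite /absq /yy; case: ifP => _; rewrite ?normr_id ?normr0 ?normr_ge0 //.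
  have Htail : forall e, 0 < e -> exists N, nrm (T N) < e.
    move=> e e0.
    have Y1 : forall m k, 0 <= yy m k /\ yy m k <= `|x k|.
      by move=> m k; rewrite /yy; case: ifP => _; split.
    have Y2 : forall m k, yy m.+1 k <= yy m k.
      move=> m k; rewrite /yy; case: ifP => H1; case: ifP => H2; rewrite ?normr_ge0 //.
      by rewrite (ltnW H1) in H2.
    have Y3 : forall k, yy m k @[m --> \oo] --> 0.
      move=> k; apply: cvg_near_cst; exists k.+1 => // n /= Hn; by rewrite /yy leqNgt Hn.
    have [N HN] := (proj1 (cvg0P _)) (Hx yy Y1 Y2 Y3) e e0. exists N; have := HN N (leqnn N); rewrite ger0_norm //; exact: (nge0 _ (XT N)).
  move=> zz Hzz Hdec Hcv.
  have Xzz m : X (zz m).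
    have [] // := Xid (zz m) _ _ Xg.
    move=> k; rewrite (ger0_norm (proj1 (Hzz m k))); exact: (proj2 (Hzz m k)).
  apply/cvg0P => e e0.
  pose e3 := e / 3.
  have e30 : 0 < e3 by rewrite divr_gt0.
  have [N HN] := Htail e3 e30.
  pose cN := \sum_(j < N) `|x j|.
  have cN0 : 0 <= cN by apply: sumr_ge0 => j _; exact: normr_ge0.
  have [M0 HM0] := harm_div (cN * nrm Ch / e3).
  pose M := maxn M0 (maxn N 1).
  have HMM : cN * nrm Ch / e3 < HM M by apply: HM0; rewrite leq_maxl.
  have MN : (N <= M)%N by rewrite /M (leq_trans _ (leq_maxr _ _)) ?leq_maxl.
  have M1 : (0 < M)%N by rewrite /M (leq_trans _ (leq_maxr _ _)) ?leq_maxr.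
  have [XyM yMb] := yM_bd M M1.
  have nCh0 := nge0 _ XCh.
  have nh0 := nge0 _ Xh.
  have HMgt0 : 0 < HM M.
    by apply: le_lt_trans HMM; rewrite divr_ge0 ?mulr_ge0 // ltW.
  have term2 : cN * nrm (yM M) < e3.
    apply: (le_lt_trans (ler_wpM2l cN0 yMb)).
    have := HMM; rewrite ltr_pdivrMr // => H.
    by rewrite mulrCA [_ * (cN * _)]mulrC ltr_pdivrMr // [e3 * _]mulrC.
  pose s m := \sum_(j < M) zz m j.
  have scv : s @ \oo --> 0 := @cvg_sum0 R M (fun j m => zz m j) (fun j _ => Hcv j).
  pose c := M%:R * nrm h.
  have c0 : 0 <= c by rewrite mulr_ge0.
  have c1 : 0 < c + 1 by apply: (lt_le_trans ltr01); rewrite lerDr.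
  have [m0 Hm0] := (proj1 (cvg0P s)) scv (e3 / (c + 1)) (divr_gt0 e30 c1).
  exists m0 => m Hm.
  have s0 : 0 <= s m by apply: sumr_ge0 => j _; case: (Hzz m j).
  have term1 : M%:R * s m * nrm h < e3.
    have := Hm0 m Hm; rewrite ger0_norm // ltr_pdivlMr // => Hs.
    rewrite mulrAC -/c; apply: le_lt_trans Hs.
    by rewrite mulrC ler_wpM2l // lerDl.
  pose u := fun k => M%:R * s m * h k + (cN * yM M k + T N k).
  have Xu : X u := XD _ _ (XZ _ _ Xh) (XD _ _ (XZ _ _ XyM) (XT N)).
  have nu : nrm u < e.
    apply: (le_lt_trans (nD _ _ (XZ _ _ Xh) (XD _ _ (XZ _ _ XyM) (XT N)))).
    rewrite nZ // ger0_norm ?mulr_ge0 //.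
    apply: (le_lt_trans (lerD (lexx _) (nD _ _ (XZ _ _ XyM) (XT N)))).
    rewrite nZ // ger0_norm //.
    rewrite /e3 in term1 term2 HN; lra.
  have le : nrm (zz m) <= nrm u.
    apply: (proj2 (Xid (zz m) u _ Xu)) => k.
    have yM0 : 0 <= yM M k by rewrite /yM; case: ifP => _ //; exact: ltW.
    rewrite (ger0_norm (proj1 (Hzz m k))) ger0_norm; last first.
      apply: addr_ge0; last by apply: addr_ge0; [exact: mulr_ge0 | exact: T0].
      by apply: mulr_ge0; [apply: mulr_ge0 | exact: ltW].
    case: (ltnP k M) => Hk.
    - apply: (le_trans (y := M%:R * s m * h k)); last first.
        by rewrite lerDl; apply: addr_ge0; [exact: mulr_ge0 | exact: T0].
      apply: (le_trans (y := s m)).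
        rewrite /s (bigD1 (Ordinal Hk)) //= lerDl.
        by apply: sumr_ge0 => j _; case: (Hzz m j).
      rewrite mulrAC; apply: ler_peMl => //.
      by rewrite /h ler_pdivlMr ?ltr0n // mul1r ler_nat.
    - have yMk : yM M k = h k by rewrite /yM Hk.
      apply: (le_trans (proj2 (Hzz m k))).
      rewrite ger0_norm; last by apply: ces_ge0 => j; exact: normr_ge0.
      apply: (le_trans (y := cN * h k + T N k)); last first.
        rewrite /u /yM Hk lerDr.
        by apply: mulr_ge0; [apply: mulr_ge0 | exact: ltW].
      rewrite /T /Defs.cesaro /h (mulrC cN) -mulrDr ler_wpM2l ?invr_ge0 //.
      rewrite /cN (big_ord_widen _ (fun j => `|x j|) (leqW (leq_trans MN Hk))).
      rewrite [X in _ <= X + _]big_mkcond -big_split /=; apply: ler_sum => j _.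
      rewrite /absq /yy; case: ifP => H1; case: ifP => H2.
      + by rewrite lerDl normr_ge0.
      + by rewrite normr0 addr0.
      + by rewrite add0r normr_id.
      + by move: H1; rewrite ltnNge H2.
  rewrite ger0_norm ?(nge0 _ (Xzz m)) //.
  exact: le_lt_trans le nu.
- move=> [Xg Hx]; split => // yy Hyy Hdec Hcv.
  have := Hx (fun m => Defs.cesaro (absq (yy m))).
  apply.
  + move=> m k; split; first by apply: ces_ge0 => j; exact: normr_ge0.
    rewrite ger0_norm; last by apply: ces_ge0 => j; exact: normr_ge0.
    apply: ces_le => j; rewrite /absq ger0_norm; first by case: (Hyy m j).
    by case: (Hyy m j).
  + move=> m k; apply: ces_le => j; rewrite /absq !ger0_norm //; try by case: (Hyy m j).
    by case: (Hyy m.+1 j).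
  + move=> k; apply/cvg0P => e e0.
    have : (fun m => \sum_(j < k.+1) absq (yy m) j) @ \oo --> 0.
      apply: (@cvg_sum0 R k.+1 (fun j m => absq (yy m) j)) => j _; apply/cvg0P => e' e'0.
      have /cvg0P := Hcv j; move=> /(_ e' e'0) [N HN]; exists N => n Hn.
      by rewrite /absq normr_id; apply: HN.
    move=> /cvg0P /(_ e e0) [N HN]; exists N => n Hn.
    apply: le_lt_trans (HN n Hn).
    have s0 : 0 <= \sum_(j < k.+1) absq (yy n) j by apply: sumr_ge0 => j _; exact: normr_ge0.
    rewrite ger0_norm; last by apply: ces_ge0 => j; exact: normr_ge0.
    rewrite ger0_norm // /Defs.cesaro ler_piMl // invr_le1 ?ler1n ?ltr0n //.
by rewrite unitfE pnatr_eq0.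
Qed.
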